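(* Let $G$ be a bounded metric operator in $\mathcal H$ and $S$ a closed densely defined operator in $\mathcal H$. Define $K$ on $D(K)=G^{1/2}D(S)$ by $K\xi=G^{1/2}SG^{-1/2}\xi$. Then $K$ is densely defined and $K^*=G^{-1/2}S^*G^{1/2}$, the latter operator being defined on its natural domain $\{\eta\in\mathcal H: G^{1/2}\eta\in D(S^* ),\ S^*G^{1/2}\eta\in D(G^{-1/2})\}$.
   Context: A metric operator in $\mathcal H$ is a self-adjoint operator $G$ with $\langle G\xi,\xi\rangle>0$ for all nonzero $\xi\in D(G)$; it is injective, and $G^{-1/2}$ denotes the (possibly unbounded) inverse of $G^{1/2}$. *)

(* Defs.v *)
From Stdlib Require Import Reals.
Open Scope R_scope.

Record C := mkC { re : R ; im : R }.
Definition C0 : C := mkC 0 0.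
Definition C1 : C := mkC 1 0.
Definition Cadd (a b : C) : C := mkC (re a + re b) (im a + im b).
Definition Cmul (a b : C) : C :=
  mkC (re a * re b - im a * im b) (re a * im b + im a * re b).
Definition Cconj (a : C) : C := mkC (re a) (- im a).

(** A complex Hilbert space structure on a type H
    (inner product linear in the first, conjugate-linear in the second argument). *)
Class HilbertSpace (H : Type) := {
  vzero : H ;
  vadd : H -> H -> H ;
  vopp : H -> H ;
  vscal : C -> H -> H ;
  inner : H -> H -> C ;
  vadd_assoc : forall x y z, vadd x (vadd y z) = vadd (vadd x y) z ;
  vadd_comm : forall x y, vadd x y = vadd y x ;
  vadd_0 : forall x, vadd x vzero = x ;
  vadd_opp : forall x, vadd x (vopp x) = vzero ;
  vscal_1 : forall x, vscal C1 x = x ;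
  vscal_mul : forall a b x, vscal a (vscal b x) = vscal (Cmul a b) x ;
  vscal_addv : forall a x y, vscal a (vadd x y) = vadd (vscal a x) (vscal a y) ;
  vscal_adds : forall a b x, vscal (Cadd a b) x = vadd (vscal a x) (vscal b x) ;
  inner_addl : forall x y z, inner (vadd x y) z = Cadd (inner x z) (inner y z) ;
  inner_scall : forall a x y, inner (vscal a x) y = Cmul a (inner x y) ;
  inner_conj : forall x y, inner y x = Cconj (inner x y) ;
  inner_pos : forall x, 0 <= re (inner x x) ;
  inner_def : forall x, inner x x = C0 -> x = vzero ;
  complete : forall u : nat -> H,
    (forall eps, eps > 0 -> exists N, forall n m, (n >= N)%nat -> (m >= N)%nat ->
        sqrt (re (inner (vadd (u n) (vopp (u m))) (vadd (u n) (vopp (u m))))) < eps) ->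
    exists l, Un_cv (fun n => sqrt (re (inner (vadd (u n) (vopp l)) (vadd (u n) (vopp l))))) 0
}.

Section Ops.
Context {H : Type} {HS : HilbertSpace H}.

Definition norm (x : H) : R := sqrt (re (inner x x)).
Definition vsub (x y : H) : H := vadd x (vopp y).

Definition converges (u : nat -> H) (l : H) : Prop :=
  Un_cv (fun n => norm (vsub (u n) l)) 0.

Definition dense (P : H -> Prop) : Prop :=
  forall x eps, eps > 0 -> exists y, P y /\ norm (vsub x y) < eps.

(** A (possibly unbounded) operator: a domain and an action
    (the action outside the domain is irrelevant). *)
Record Op := mkOp { dom : H -> Prop ; app : H -> H }.

Definition linear_op (T : Op) : Prop :=
  dom T vzero /\
  (forall x y, dom T x -> dom T y -> dom T (vadd x y)) /\
  (forall a x, dom T x -> dom T (vscal a x)) /\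
  (forall x y, dom T x -> dom T y -> app T (vadd x y) = vadd (app T x) (app T y)) /\
  (forall a x, dom T x -> app T (vscal a x) = vscal a (app T x)).

Definition densely_defined (T : Op) : Prop := dense (dom T).

Definition closed_op (T : Op) : Prop :=
  forall (u : nat -> H) x y, (forall n, dom T (u n)) ->
    converges u x -> converges (fun n => app T (u n)) y ->
    dom T x /\ app T x = y.

Definition is_adjoint (T Ts : Op) : Prop :=
  (forall eta, dom Ts eta <->
     exists zeta, forall xi, dom T xi -> inner (app T xi) eta = inner xi zeta) /\
  (forall eta xi, dom Ts eta -> dom T xi ->
     inner (app T xi) eta = inner xi (app Ts eta)).

Definition bounded_op (A : H -> H) : Prop :=
  (forall x y, A (vadd x y) = vadd (A x) (A y)) /\
  (forall a x, A (vscal a x) = vscal a (A x)) /\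
  (exists M, forall x, norm (A x) <= M * norm x).

Definition bounded_selfadjoint (A : H -> H) : Prop :=
  bounded_op A /\ forall x y, inner (A x) y = inner x (A y).

Definition bounded_metric_operator (G : H -> H) : Prop :=
  bounded_selfadjoint G /\
  forall x, x <> vzero -> im (inner (G x) x) = 0 /\ re (inner (G x) x) > 0.

(** R is the positive square root G^{1/2} of the bounded positive operator G
    (characterized by: bounded, self-adjoint, positive, R R = G; it is unique). *)
Definition positive_sqrt (R0 G : H -> H) : Prop :=
  bounded_selfadjoint R0 /\
  (forall x, im (inner (R0 x) x) = 0 /\ 0 <= re (inner (R0 x) x)) /\
  (forall x, R0 (R0 x) = G x).

End Ops.
Arguments Op H : clear implicits.

(* Main.v *)
From Stdlib Require Import Reals Lra Lia Classical.
Require Import Defs.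
Open Scope R_scope.

Section Alg.
Context {H : Type} {HS : HilbertSpace H}.

Lemma C_eq a b c d : a = c -> b = d -> mkC a b = mkC c d.
Proof. intros; subst; reflexivity. Qed.

Lemma vadd_0l x : vadd vzero x = x.
Proof. rewrite vadd_comm; apply vadd_0. Qed.

Lemma vopp_l x : vadd (vopp x) x = vzero.
Proof. rewrite vadd_comm; apply vadd_opp. Qed.

Lemma vadd_cancel x y z : vadd x y = vadd x z -> y = z.
Proof.
  intro E. assert (E2 : vadd (vopp x) (vadd x y) = vadd (vopp x) (vadd x z)) by (rewrite E; auto).
  rewrite !vadd_assoc, vopp_l, !vadd_0l in E2. exact E2.
Qed.

Lemma vscal_0 x : vscal C0 x = vzero.
Proof.
  apply (vadd_cancel (vscal C0 x)). rewrite vadd_0, <- vscal_adds.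
  f_equal. unfold Cadd, C0; simpl; apply C_eq; ring.
Qed.

Definition m1 : Defs.C := mkC (-1) 0.

Lemma vopp_scal x : vopp x = vscal m1 x.
Proof.
  apply (vadd_cancel x). rewrite vadd_opp.
  rewrite <- (vscal_1 x) at 1. rewrite <- vscal_adds.
  replace (Cadd C1 m1) with C0 by (unfold Cadd, C1, m1, C0; simpl; apply C_eq; ring).
  rewrite vscal_0; reflexivity.
Qed.

Lemma inner_addr x y z : inner x (vadd y z) = Cadd (inner x y) (inner x z).
Proof.
  rewrite inner_conj, inner_addl, (inner_conj y x), (inner_conj z x).
  destruct (inner x y), (inner x z); unfold Cconj, Cadd; simpl; apply C_eq; ring.
Qed.

Lemma inner_scalr a x y : inner x (vscal a y) = Cmul (Cconj a) (inner x y).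
Proof.
  rewrite inner_conj, inner_scall, (inner_conj y x).
  destruct a, (inner x y); unfold Cconj, Cmul; simpl; apply C_eq; ring.
Qed.

Lemma vzero_scal : vzero = vscal C0 vzero.
Proof. rewrite vscal_0; auto. Qed.

Lemma inner_0l y : inner vzero y = C0.
Proof.
  rewrite vzero_scal, inner_scall. destruct (inner vzero y);
  unfold Cmul, C0; simpl; apply C_eq; ring.
Qed.

Lemma inner_0r y : inner y vzero = C0.
Proof.
  rewrite inner_conj, inner_0l. unfold Cconj, C0; simpl; apply C_eq; ring.
Qed.

Lemma inner_oppl x y : inner (vopp x) y = Cmul m1 (inner x y).
Proof. rewrite vopp_scal, inner_scall; auto. Qed.

Lemma inner_oppr x y : inner x (vopp y) = Cmul m1 (inner x y).
Proof. rewrite vopp_scal, inner_scalr. f_equal. unfold Cconj, m1; simpl; apply C_eq; ring. Qed.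

Definition rc (a : R) : Defs.C := mkC a 0.

Lemma re_addl x y z : re (inner (vadd x y) z) = re (inner x z) + re (inner y z).
Proof. rewrite inner_addl; reflexivity. Qed.
Lemma re_addr x y z : re (inner x (vadd y z)) = re (inner x y) + re (inner x z).
Proof. rewrite inner_addr; reflexivity. Qed.
Lemma re_oppl x y : re (inner (vopp x) y) = - re (inner x y).
Proof. rewrite inner_oppl; unfold Cmul, m1; simpl; ring. Qed.
Lemma re_oppr x y : re (inner x (vopp y)) = - re (inner x y).
Proof. rewrite inner_oppr; unfold Cmul, m1; simpl; ring. Qed.
Lemma re_scall a x y : re (inner (vscal (rc a) x) y) = a * re (inner x y).
Proof. rewrite inner_scall; unfold Cmul, rc; simpl; ring. Qed.
Lemma re_scalr a x y : re (inner x (vscal (rc a) y)) = a * re (inner x y).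
Proof. rewrite inner_scalr; unfold Cmul, Cconj, rc; simpl; ring. Qed.
Lemma re_sym x y : re (inner y x) = re (inner x y).
Proof. rewrite inner_conj; reflexivity. Qed.
Lemma im_self x : im (inner x x) = 0.
Proof. pose proof (f_equal im (inner_conj x x)) as E. simpl in E. lra. Qed.

Definition q (x : H) := re (inner x x).
Lemma q_pos x : 0 <= q x. Proof. apply inner_pos. Qed.

Lemma q_zero x : q x = 0 -> x = vzero.
Proof.
  intro E. apply inner_def. destruct (inner x x) eqn:Ex.
  unfold q in E; rewrite Ex in E; simpl in E. pose proof (im_self x) as I; rewrite Ex in I; simpl in I.
  subst; reflexivity.
Qed.

Lemma norm_sq x : norm x * norm x = q x.
Proof. unfold norm; apply sqrt_sqrt, q_pos. Qed.
Lemma norm_pos x : 0 <= norm x. Proof. apply sqrt_pos. Qed.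

Lemma norm_zero x : norm x = 0 -> x = vzero.
Proof. intro E. apply q_zero. rewrite <- norm_sq, E; ring. Qed.

Lemma q_add x y : q (vadd x y) = q x + q y + 2 * re (inner x y).
Proof. unfold q. rewrite re_addl, !re_addr, (re_sym y x). ring. Qed.

Lemma cauchy_schwarz x y : re (inner x y) ^ 2 <= q x * q y.
Proof.
  set (r := re (inner x y)).
  assert (Q : forall t, 0 <= q x + 2 * t * r + t * t * q y).
  { intro t. pose proof (q_pos (vadd x (vscal (rc t) y))) as P.
    rewrite q_add in P. unfold q in P. rewrite re_scall, re_scalr, re_scalr in P.
    unfold q, r. lra. }
  pose proof (q_pos x). pose proof (q_pos y).
  destruct (Req_dec (q y) 0) as [E|E].
  - rewrite E. destruct (Req_dec r 0) as [E2|E2]. { rewrite E2; nra. }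
    exfalso. specialize (Q (- (q x + 1) / (2 * r))). rewrite E in Q.
    replace (2 * (- (q x + 1) / (2 * r)) * r) with (- (q x + 1)) in Q by (field; auto). nra.
  - specialize (Q (- r / q y)).
    assert (EQ : q x + 2 * (- r / q y) * r + - r / q y * (- r / q y) * q y = q x - (r*r) / q y) by (field; auto).
    rewrite EQ in Q.
    assert (0 < q y) by lra.
    assert (r * r <= q x * q y).
    { apply Rmult_le_reg_r with (/ q y). apply Rinv_0_lt_compat; auto.
      replace (r * r * / q y) with ((r*r)/q y) by (unfold Rdiv; ring).
      replace (q x * q y * / q y) with (q x) by (field; auto). lra. }
    nra.
Qed.

Lemma cs_norm x y : re (inner x y) <= norm x * norm y.
Proof.
  pose proof (cauchy_schwarz x y). rewrite <- !norm_sq in H0.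
  pose proof (norm_pos x); pose proof (norm_pos y).
  assert (0 <= norm x * norm y) by nra. nra.
Qed.

Lemma norm_tri x y : norm (vadd x y) <= norm x + norm y.
Proof.
  pose proof (q_add x y). rewrite <- !norm_sq in H0.
  pose proof (cs_norm x y). pose proof (norm_pos x); pose proof (norm_pos y);
  pose proof (norm_pos (vadd x y)). nra.
Qed.

Lemma vopp_vadd x y : vopp (vadd x y) = vadd (vopp x) (vopp y).
Proof. rewrite !vopp_scal, vscal_addv; auto. Qed.

Lemma vopp_opp x : vopp (vopp x) = x.
Proof. apply (vadd_cancel (vopp x)). rewrite vadd_opp, vopp_l; auto. Qed.

Lemma vsub_split x y z : vsub x z = vadd (vsub x y) (vsub y z).
Proof.
  unfold vsub. rewrite <- vadd_assoc, (vadd_assoc (vopp y)), vopp_l, vadd_0l; auto.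
Qed.

Lemma norm_tri3 x y z : norm (vsub x z) <= norm (vsub x y) + norm (vsub y z).
Proof. rewrite (vsub_split x y z); apply norm_tri. Qed.

Lemma vsub_0 x : vsub x vzero = x.
Proof. unfold vsub. replace (vopp vzero) with vzero. apply vadd_0.
  rewrite <- (vopp_l vzero) at 1. rewrite vadd_0; auto. Qed.

Lemma vsub_eq0 a b : vsub a b = vzero -> a = b.
Proof.
  unfold vsub; intro E. apply (vadd_cancel (vopp b)). rewrite vopp_l, vadd_comm; auto.
Qed.

Lemma norm_scal a x : norm (vscal (rc a) x) = Rabs a * norm x.
Proof.
  unfold norm. replace (re (inner (vscal (rc a) x) (vscal (rc a) x))) with ((a*a) * re (inner x x)).
  rewrite sqrt_mult_alt by nra. f_equal. change (a*a) with (Rsqr a); apply sqrt_Rsqr_abs.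
  rewrite re_scall, re_scalr; ring.
Qed.

Lemma norm_opp x : norm (vopp x) = norm x.
Proof. unfold norm. rewrite re_oppl, re_oppr. f_equal; ring. Qed.

Lemma vsub_sym x y : vsub x y = vopp (vsub y x).
Proof. unfold vsub. rewrite vopp_vadd, vopp_opp, vadd_comm; auto. Qed.

Lemma norm_vsub_sym x y : norm (vsub x y) = norm (vsub y x).
Proof. rewrite vsub_sym, norm_opp; auto. Qed.

Lemma sqrt_lt_sq a e : 0 <= a -> 0 < e -> a < e * e -> sqrt a < e.
Proof.
  intros. rewrite <- (sqrt_pow2 e) by lra. apply sqrt_lt_1_alt. split; auto. simpl; lra.
Qed.

Lemma norm_lt x e : 0 < e -> q x < e * e -> norm x < e.
Proof. intros; unfold norm; apply sqrt_lt_sq; auto; apply q_pos. Qed.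

End Alg.

Section Dense.
Context {H : Type} {HS : HilbertSpace H}.
Variable A : H -> H.
Hypothesis Aadd : forall x y, A (vadd x y) = vadd (A x) (A y).
Hypothesis Ascal : forall a x, A (vscal a x) = vscal a (A x).
Hypothesis Asa : forall x y, inner (A x) y = inner x (A y).
Variable Mp : R.
Hypothesis Mp_pos : 0 < Mp.
Hypothesis Abnd : forall x, norm (A x) <= Mp * norm x.
Hypothesis Ainj2 : forall x, A (A x) = vzero -> x = vzero.

Lemma A0 : A vzero = vzero.
Proof. rewrite vzero_scal, Ascal, !vscal_0; auto. Qed.

Lemma Aopp x : A (vopp x) = vopp (A x).
Proof. rewrite !vopp_scal, Ascal; auto. Qed.

Lemma Asub x y : A (vsub x y) = vsub (A x) (A y).
Proof. unfold vsub. rewrite Aadd, Aopp; auto. Qed.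

Definition c := / (Mp * Mp).
Lemma c_pos : 0 < c. Proof. unfold c. apply Rinv_0_lt_compat; nra. Qed.
Lemma c_Mp : c * (Mp * Mp) = 1. Proof. unfold c. field. lra. Qed.

Definition B z := vadd z (vscal (rc (- c)) (A (A z))).
Definition Bn (n : nat) (z : H) := Nat.iter n B z.

Lemma B_sa u v : re (inner (B u) v) = re (inner u (B v)).
Proof.
  unfold B. rewrite re_addl, re_addr, re_scall, re_scalr, Asa, Asa. reflexivity.
Qed.

Lemma Bn_S' k v : Bn (S k) v = Bn k (B v).
Proof.
  induction k; simpl; auto. unfold Bn in *; simpl in *. rewrite <- IHk. reflexivity.
Qed.

Lemma Bn_sa k u v : re (inner (Bn k u) v) = re (inner u (Bn k v)).
Proof.
  revert u v. induction k; intros u v; simpl; auto.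
  change (re (inner (B (Bn k u)) v) = re (inner u (Bn (S k) v))).
  rewrite B_sa, IHk, Bn_S'. reflexivity.
Qed.

Lemma Bn_add a b x : Bn a (Bn b x) = Bn (a + b) x.
Proof.
  induction a; simpl; auto. unfold Bn in *; simpl. rewrite IHa. reflexivity.
Qed.

Lemma B_contr z : q (B z) + c * q (A z) <= q z.
Proof.
  unfold B. rewrite q_add.
  assert (E1 : q (vscal (rc (- c)) (A (A z))) = c * c * q (A (A z))).
  { unfold q. rewrite re_scall, re_scalr. ring. }
  assert (E2 : re (inner z (vscal (rc (- c)) (A (A z)))) = - c * q (A z)).
  { rewrite re_scalr. unfold q. rewrite (Asa z (A z)). reflexivity. }
  rewrite E1, E2.
  pose proof (Abnd (A z)) as Bd. pose proof (norm_pos (A (A z))). pose proof (norm_pos (A z)).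
  assert (Q : q (A (A z)) <= (Mp * Mp) * q (A z)).
  { rewrite <- !norm_sq. nra. }
  pose proof c_Mp. pose proof c_pos.
  assert (c * c * q (A (A z)) <= c * q (A z)).
  { apply Rle_trans with (c * c * ((Mp * Mp) * q (A z))).
    apply Rmult_le_compat_l; nra. replace (c * c * (Mp * Mp * q (A z))) with (c * (c * (Mp*Mp)) * q (A z)) by ring.
    rewrite c_Mp. lra. }
  nra.
Qed.

Lemma Bn_range x k : exists y, Bn k x = vsub x (A y).
Proof.
  induction k.
  - exists vzero. rewrite A0, vsub_0. reflexivity.
  - destruct IHk as [y Hy]. set (w := Bn k x).
    exists (vadd y (vscal (rc c) (A w))).
    change (B w = vsub x (A (vadd y (vscal (rc c) (A w))))).
    unfold B. rewrite Aadd, Ascal. unfold vsub. rewrite vopp_vadd.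
    replace (vopp (vscal (rc c) (A (A w)))) with (vscal (rc (- c)) (A (A w))).
    2:{ rewrite vopp_scal, vscal_mul. f_equal. unfold m1, rc, Cmul; simpl; apply C_eq; ring. }
    rewrite vadd_assoc. f_equal. unfold w; rewrite Hy. reflexivity.
Qed.

Lemma range_dense x eps : eps > 0 -> exists y, norm (vsub x (A y)) < eps.
Proof.
  intro Heps.
  set (b := fun k => q (Bn k x)).
  assert (bdec : Un_decreasing b).
  { intro n. unfold b. change (Bn (S n) x) with (B (Bn n x)).
    pose proof (B_contr (Bn n x)). pose proof (q_pos (A (Bn n x))). pose proof c_pos. nra. }
  assert (blb : has_lb b). { exists 0. intros y [n ->]. unfold opp_seq, b. pose proof (q_pos (Bn n x)). lra. }
  destruct (decreasing_cv b bdec blb) as [l Hl].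
  assert (bge : forall k, l <= b k).
  { intro k. destruct (Rle_dec l (b k)) as [ok|nok]; auto. exfalso.
    destruct (Hl (l - b k)) as [N HN]; [lra|].
    specialize (HN (Nat.max N k) (Nat.le_max_l _ _)).
    assert (b (Nat.max N k) <= b k).
    { apply (Rle_trans _ _ _ (Rle_refl _)).
      assert (forall d, b (k + d)%nat <= b k).
      { induction d. rewrite Nat.add_0_r; lra. rewrite Nat.add_succ_r. eapply Rle_trans; [apply bdec|auto]. }
      replace (Nat.max N k) with (k + (Nat.max N k - k))%nat by lia. auto. }
    unfold Rdist in HN. rewrite Rabs_left1 in HN; lra. }
  assert (bmono : forall n m, (n <= m)%nat -> b m <= b n).
  { intros n m Hnm. replace m with (n + (m - n))%nat by lia. generalize (m - n)%nat. intro d.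
    induction d. rewrite Nat.add_0_r; lra. rewrite Nat.add_succ_r. eapply Rle_trans; [apply bdec|auto]. }
  assert (bclose : forall e, e > 0 -> exists N, forall n, (n >= N)%nat -> b n - l < e).
  { intros e He. destruct (Hl e He) as [N HN]. exists N. intros n Hn. specialize (HN n Hn).
    unfold Rdist in HN. pose proof (bge n). rewrite Rabs_right in HN; lra. }
  set (u := fun n => Bn (2 * n) x).
  assert (qu : forall n m, q (vsub (u n) (u m)) = b (2*n)%nat + b (2*m)%nat - 2 * b (n + m)%nat).
  { intros n m. unfold vsub. rewrite q_add. unfold q, b, u.
    rewrite !re_oppl, !re_oppr.
    assert (G1 : forall i j, re (inner (Bn i x) (Bn j x)) = re (inner x (Bn (i + j) x))).
    { intros i j. rewrite Bn_sa, Bn_add. reflexivity. }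
    unfold q. rewrite !G1.
    replace (n + m + (n + m))%nat with (2*n + 2*m)%nat by lia.
    ring. }
  assert (cauchy : forall e, e > 0 -> exists N, forall n m, (n >= N)%nat -> (m >= N)%nat ->
        sqrt (re (inner (vadd (u n) (vopp (u m))) (vadd (u n) (vopp (u m))))) < e).
  { intros e He. destruct (bclose (e * e / 4)) as [N HN]. { apply Rdiv_lt_0_compat; nra. }
    exists N. intros n m Hn Hm.
    change (norm (vsub (u n) (u m)) < e). apply norm_lt; auto. rewrite qu.
    pose proof (HN (2*n)%nat ltac:(lia)). pose proof (HN (2*m)%nat ltac:(lia)).
    pose proof (bge (n+m)%nat). unfold Rdiv in *. nra. }
  destruct (complete u cauchy) as [L HL].
  assert (AL : A L = vzero).
  { apply norm_zero. destruct (Rle_lt_or_eq_dec 0 (norm (A L)) (norm_pos _)) as [Pos|Z]; [|auto].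
    exfalso. remember (norm (A L)) as e eqn:Ee.
    destruct (HL (e / 2 / Mp)) as [N1 HN1]. { apply Rdiv_lt_0_compat; [apply Rdiv_lt_0_compat|]; lra. }
    destruct (bclose (c * (e / 2) * (e / 2))) as [N2 HN2].
    { pose proof c_pos. apply Rmult_lt_0_compat; [apply Rmult_lt_0_compat|]; lra. }
    set (n := Nat.max N1 N2).
    specialize (HN1 n (Nat.le_max_l _ _)). specialize (HN2 (2*n)%nat ltac:(unfold n; lia)).
    unfold Rdist in HN1. rewrite Rminus_0_r, Rabs_right in HN1 by (apply Rle_ge, sqrt_pos).
    change (norm (vsub (u n) L) < e / 2 / Mp) in HN1.
    assert (h1 : norm (A (vsub (u n) L)) < e / 2).
    { eapply Rle_lt_trans; [apply Abnd|]. apply Rmult_lt_reg_l with (/ Mp).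
      apply Rinv_0_lt_compat; lra. replace (/ Mp * (Mp * norm (vsub (u n) L))) with (norm (vsub (u n) L)) by (field; lra).
      replace (/ Mp * (e/2)) with (e / 2 / Mp) by (field; lra). auto. }
    assert (h2 : norm (A (u n)) < e / 2).
    { apply norm_lt. lra. pose proof (B_contr (u n)). pose proof (bge (S (2*n))).
      assert (b (S (2 * n)) = q (B (u n))) by reflexivity. pose proof c_pos.
      apply Rmult_lt_reg_l with c; auto. unfold b, u in *. nra. }
    rewrite Asub in h1.
    pose proof (norm_tri3 (A L) (A (u n)) vzero). rewrite !vsub_0 in H0.
    rewrite norm_vsub_sym in h1. rewrite <- Ee in H0. lra. }
  assert (L0 : L = vzero). { apply Ainj2. rewrite AL, A0. reflexivity. }
  subst L.
  destruct (HL eps Heps) as [N HN]. specialize (HN N (le_n _)).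
  unfold Rdist in HN. rewrite Rminus_0_r, Rabs_right in HN by (apply Rle_ge, sqrt_pos).
  change (norm (vsub (u N) vzero) < eps) in HN. rewrite vsub_0 in HN.
  destruct (Bn_range x (2 * N)) as [y Hy]. exists y. rewrite <- Hy. exact HN.
Qed.

End Dense.

Lemma orth_dense {H : Type} {HS : HilbertSpace H} (P : H -> Prop) (w : H) :
  dense P -> (forall x, P x -> inner x w = C0) -> w = vzero.
Proof.
  intros D O. apply norm_zero.
  destruct (Rle_lt_or_eq_dec 0 (norm w) (norm_pos _)) as [Pos|Z]; [|auto].
  exfalso. destruct (D w (norm w / 2)) as [y [Py Hy]]. lra.
  pose proof (cs_norm (vsub w y) w).
  unfold vsub in H0. rewrite re_addl, re_oppl, (O y Py) in H0. simpl in H0.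
  change (re (inner w w)) with (q w) in H0. rewrite <- norm_sq in H0.
  pose proof (norm_pos (vadd w (vopp y))).
  assert (norm (vadd w (vopp y)) * norm w <= norm w / 2 * norm w).
  { apply Rmult_le_compat_r; [apply norm_pos|]. unfold vsub in Hy; lra. }
  nra.
Qed.

Theorem lemma5p5 (H : Type) (HS : HilbertSpace H)
  (G Ghalf : H -> H) (S Sstar K Kstar_rhs : Op H) :
  bounded_metric_operator G ->
  positive_sqrt Ghalf G ->
  linear_op S -> closed_op S -> densely_defined S ->
  is_adjoint S Sstar ->
  (* K on D(K) = G^{1/2} D(S), K xi = G^{1/2} S G^{-1/2} xi *)
  (forall xi, dom K xi <-> exists x, dom S x /\ xi = Ghalf x) ->
  (forall x, dom S x -> app K (Ghalf x) = Ghalf (app S x)) ->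
  (* G^{-1/2} S* G^{1/2} on its natural domain *)
  (forall eta, dom Kstar_rhs eta <->
     dom Sstar (Ghalf eta) /\ exists zeta, Ghalf zeta = app Sstar (Ghalf eta)) ->
  (forall eta, dom Kstar_rhs eta -> Ghalf (app Kstar_rhs eta) = app Sstar (Ghalf eta)) ->
  densely_defined K /\ is_adjoint K Kstar_rhs.
Proof.
  intros HG Hsq _ _ HSd [HSa1 HSa2] HKd HKa HKs1 HKs2.
  destruct HG as [_ Hmet].
  destruct Hsq as [[[Aadd [Ascal [M HM]]] Asa] [_ HAA]].
  set (A := Ghalf) in *.
  set (Mp := Rabs M + 1).
  assert (Mp_pos : 0 < Mp) by (unfold Mp; pose proof (Rabs_pos M); lra).
  assert (Abnd : forall x, norm (A x) <= Mp * norm x).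
  { intro x. eapply Rle_trans; [apply HM|]. apply Rmult_le_compat_r; [apply norm_pos|].
    unfold Mp; pose proof (Rle_abs M); lra. }
  assert (Ainj2 : forall x, A (A x) = vzero -> x = vzero).
  { intros x E. destruct (classic (x = vzero)) as [ok|nz]; auto. exfalso.
    destruct (Hmet x nz) as [_ Pos]. rewrite <- HAA in Pos. fold A in Pos. rewrite E, inner_0l in Pos.
    simpl in Pos; lra. }
  split.
  -
    intros x eps Heps.
    destruct (range_dense A Aadd Ascal Asa Mp Mp_pos Abnd Ainj2 x (eps / 2)) as [y Hy]; [lra|].
    destruct (HSd y (eps / 2 / Mp)) as [s [Ds Hs]].
    { apply Rdiv_lt_0_compat; [apply Rdiv_lt_0_compat|]; lra. }
    exists (A s). split. { apply HKd. exists s; auto. }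
    pose proof (norm_tri3 x (A y) (A s)).
    rewrite <- (Asub A Aadd Ascal) in H0.
    pose proof (Abnd (vsub y s)).
    assert (Mp * norm (vsub y s) < eps / 2).
    { apply Rmult_lt_reg_l with (/ Mp). apply Rinv_0_lt_compat; lra.
      replace (/ Mp * (Mp * norm (vsub y s))) with (norm (vsub y s)) by (field; lra).
      replace (/ Mp * (eps/2)) with (eps / 2 / Mp) by (field; lra). auto. }
    lra.
  - assert (Key : forall eta xi zeta, dom K xi -> A zeta = app Sstar (A eta) -> dom Sstar (A eta) ->
              inner (app K xi) eta = inner xi zeta).
    { intros eta xi zeta Dxi Ez Dse. apply HKd in Dxi. destruct Dxi as [x [Dx ->]].
      rewrite (HKa x Dx). rewrite Asa, HSa2 by auto. rewrite <- Ez, <- Asa. reflexivity. }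
    split.
    + intro eta. split.
      * intro D. exists (app Kstar_rhs eta). intros xi Dxi.
        apply Key; [auto | apply HKs2; auto | exact (proj1 (proj1 (HKs1 eta) D))].
      * intros [zeta Hz].
        assert (DS : dom Sstar (A eta)).
        { apply HSa1. exists (A zeta). intros x Dx.
          rewrite <- Asa, <- (HKa x Dx). rewrite Hz. rewrite Asa; reflexivity.
          apply HKd; exists x; auto. }
        apply HKs1. split; auto. exists zeta.
        apply vsub_eq0. apply (orth_dense (dom S)); auto.
        intros x Dx. unfold vsub. rewrite inner_addr, inner_oppr.
        rewrite <- HSa2 by auto. rewrite <- (Asa (app S x) eta), <- (HKa x Dx).
        rewrite Hz by (apply HKd; exists x; auto). rewrite Asa.
        destruct (inner x (A zeta)); unfold Cadd, Cmul, m1, C0; simpl; apply C_eq; ring.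
    + intros eta xi De Dxi.
      apply Key; [exact Dxi | apply HKs2; exact De | exact (proj1 (proj1 (HKs1 eta) De))].
Qed.
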